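(* Consider the system \[ x_{k+1} = x_k - \rho y_k + \hat g(y_k,w_k),\qquad y_{k+1} = (1-\beta)y_k + \hat h(y_{k-1},w_{k-1})\bigl(J(x_k)-J(x_{k-1})\bigr) \] with the setup described in the context. Then for every $k\ge1$, \[ \begin{aligned} \mathbb{E}[\tilde x_{k+1}y_{k+1}]&=-\rho(1-\beta)\mathbb{E}[y_k^2]+\mu\gamma\,\mathbb{E}[\tilde x_{k-1}^2]+\mu\gamma\frac{3\rho^2+\psi}{2}\mathbb{E}[y_{k-1}^2]-3\mu\rho\gamma\,\mathbb{E}[\tilde x_{k-1}y_{k-1}]\\ &\quad+(1-\beta-\mu\rho\gamma)\mathbb{E}[\tilde x_ky_k]+\frac{\mu\gamma\psi\varepsilon}{2}\bigl(\varepsilon+2\mathbb{E}[|y_{k-1}|]\bigr). \end{aligned} \]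
   Context: Setup. Parameters: $\rho>0$, $\beta\in(0,2)$, $\varepsilon>0$, $\omega>0$. The random variables $w_i$, $i\in\mathbb{N}\cup\{0\}$, are i.i.d., each taking the value $-\omega$ or $\omega$ with probability $1/2$. The functions $h,g:\mathbb{R}\to\mathbb{R}$ are odd, satisfy $\mathrm{sign}(g(w))=\mathrm{sign}(h(w))$ for all $w$, and $g(w)=h(w)=0$ if and only if $w=0$. Define $\hat h(y,w):=\frac{h(w)}{|y|+\varepsilon}$ and $\hat g(y,w):=(|y|+\varepsilon)g(w)$. The objective is $J(x)=J^*+\frac{\mu}{2}(x-x^* )^2$ with $\mu>0$, $x^*,J^*\in\mathbb{R}$. The initial data $x_0,y_0$ and the initialization $y_1$ (the $y$-update being applied for $k\ge1$) are deterministic. Notation: $\tilde x_k:=x_k-x^*$, $\psi:=\mathbb{E}[g(w_k)^2]$, $\gamma:=\mathbb{E}[h(w_k)g(w_k)]$. *)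

(* Defs.v *)
From HB Require Import structures.
From mathcomp Require Import all_boot all_order all_algebra.
From mathcomp Require Import finmap.
From mathcomp Require Import all_classical all_reals all_analysis.
Set Implicit Arguments. Unset Strict Implicit. Unset Printing Implicit Defensive.
Import Order.TTheory GRing.Theory Num.Theory.
Local Open Scope classical_set_scope.
Local Open Scope ring_scope.

Definition expect d (T : measurableType d) (R : realType)
  (P : probability T R) (f : T -> R) : R :=
  fine (\int[P]_t (f t)%:E).

Definition mutually_independent d (T : measurableType d) (R : realType)
  (P : probability T R) (X : nat -> T -> R) : Prop :=
  forall (I : {fset nat}) (B : nat -> set R),
    (forall i, i \in I -> measurable (B i)) ->
    P (\bigcap_(i in [set` I]) (X i @^-1` B i)) =
    (\prod_(i <- I) P (X i @^-1` B i))%E.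

Definition hhat (R : realType) (eps : R) (h : R -> R) (y w : R) : R :=
  h w / (`|y| + eps).

Definition ghat (R : realType) (eps : R) (g : R -> R) (y w : R) : R :=
  (`|y| + eps) * g w.

Definition Jquad (R : realType) (Jstar mu xstar : R) (x : R) : R :=
  Jstar + mu / 2 * (x - xstar) ^+ 2.

(* Main.v *)
Require Import Defs.
From HB Require Import structures.
From mathcomp Require Import all_boot all_order all_algebra.
From mathcomp Require Import finmap.
From mathcomp Require Import all_classical all_reals all_analysis.
From mathcomp Require Import lra ring zify.
Import Order.TTheory GRing.Theory Num.Theory.
Set Implicit Arguments. Unset Strict Implicit. Unset Printing Implicit Defensive.
Local Open Scope classical_set_scope.
Local Open Scope ring_scope.

Section Alg.
Variable R : realType.
Implicit Types rho beta eps mu xstar Jstar G H U yy ay q om s : R.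

Definition Phi rho beta eps mu xstar Jstar G H U yy ay q om s : R :=
  let a := ay + eps in
  let Jq := fun x : R => Jstar + mu / 2 * (x - xstar) ^+ 2 in
  let X1 := U - rho * yy + a * (G / om * s) in
  let Y2 := (1 - beta) * q + (H / om * s) / a * (Jq X1 - Jq U) in
  let gm := H * G in let ps := G ^+ 2 in
  let Rr := - rho * (1 - beta) * q ^+ 2 + mu * gm * (U - xstar) ^+ 2
     + mu * gm * ((3 * rho ^+ 2 + ps) / 2) * yy ^+ 2 + (- (3 * mu * rho * gm)) * ((U - xstar) * yy)
     + (1 - beta - mu * rho * gm) * ((X1 - xstar) * q) + mu * gm * ps * eps / 2 * (eps + 2 * ay) in
  (X1 - xstar - rho * q) * Y2 - Rr.

Lemma phi_even rho beta eps mu xstar Jstar om G H U yy ay q :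
  om != 0 -> ay + eps != 0 -> ay ^+ 2 = yy ^+ 2 ->
  Phi rho beta eps mu xstar Jstar G H U yy ay q om om + Phi rho beta eps mu xstar Jstar G H U yy ay q om (- om) = 0.
Proof.
move=> om0 a0 hay. rewrite /Phi; cbv zeta beta.
have -> : forall c : R, c * ((3 * rho ^+ 2 + G ^+ 2) / 2) * yy ^+ 2 = c * (3 * rho ^+ 2 / 2) * yy ^+ 2 + c * (G ^+ 2 / 2) * ay ^+ 2.
  by move=> c; rewrite hay; ring.
by field; rewrite om0 a0.
Qed.

Definition Z2f rho beta eps mu xstar Jstar G H om U yy q : R :=
  (Phi rho beta eps mu xstar Jstar G H U yy `|yy| q om om
   - Phi rho beta eps mu xstar Jstar G H U yy `|yy| q om (- om)) / (2 * om).

Lemma phi_odd rho beta eps mu xstar Jstar om G H U yy q s :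
  om != 0 -> `|yy| + eps != 0 -> (s = om \/ s = - om) ->
  Phi rho beta eps mu xstar Jstar G H U yy `|yy| q om s = s * Z2f rho beta eps mu xstar Jstar G H om U yy q.
Proof.
move=> om0 a0 hs; have := @phi_even rho beta eps mu xstar Jstar om G H U yy `|yy| q om0 a0 (real_normK (num_real yy)).
rewrite /Z2f; case: hs => ->;
set A := Phi _ _ _ _ _ _ _ _ _ _ _ _ _ om; set B := Phi _ _ _ _ _ _ _ _ _ _ _ _ _ (- om);
move=> e; have eB : B = - A by apply/eqP; rewrite -addr_eq0 addrC e.
  by rewrite eB; field; rewrite om0.
by rewrite eB; field; rewrite om0.
Qed.

Lemma pt_alg rho beta eps mu xstar Jstar om G H (g h : R -> R) U yy q s s' :
  om != 0 -> `|yy| + eps != 0 -> (s = om \/ s = - om) ->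
  g s = G / om * s -> g s' = G / om * s' -> h s = H / om * s ->
  (U - rho * yy + ghat eps g yy s - rho * q + ghat eps g q s' - xstar) *
    ((1 - beta) * q + hhat eps h yy s * (Jquad Jstar mu xstar (U - rho * yy + ghat eps g yy s) - Jquad Jstar mu xstar U))
  = (- rho * (1 - beta) * q ^+ 2 + mu * (H * G) * (U - xstar) ^+ 2
     + mu * (H * G) * ((3 * rho ^+ 2 + G ^+ 2) / 2) * yy ^+ 2
     + (- (3 * mu * rho * (H * G))) * ((U - xstar) * yy)
     + (1 - beta - mu * rho * (H * G)) * ((U - rho * yy + ghat eps g yy s - xstar) * q)
     + mu * (H * G) * G ^+ 2 * eps / 2 * (eps + 2 * `|yy|))
    + (Z2f rho beta eps mu xstar Jstar G H om U yy q * s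
       + (`|q| + eps) * (G / om) *
         ((1 - beta) * q + hhat eps h yy s * (Jquad Jstar mu xstar (U - rho * yy + ghat eps g yy s) - Jquad Jstar mu xstar U)) * s').
Proof.
move=> om0 a0 hs hg hg' hh.
have := @phi_odd rho beta eps mu xstar Jstar om G H U yy q s om0 a0 hs.
set z := Z2f _ _ _ _ _ _ _ _ _ _ _ _; clearbody z.
rewrite /Phi /ghat /hhat /Jquad hg hg' hh; cbv zeta beta => hphi.
apply/eqP; rewrite -subr_eq0; apply/eqP.
match goal with |- ?L = 0 => transitivity (L - 0) end; first by rewrite subr0.
rewrite -(subrr (s * z)) -{1}hphi.
by field; rewrite om0 a0.
Qed.
End Alg.

Definition In n : {fset nat} := seq_fset tt (iota 0 n).
Lemma inIn n i : (i \in In n) = (i < n)%N.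
Proof. by rewrite /In seq_fsetE mem_iota. Qed.

Section S.
Variables (R : realType) (d : measure_display) (T : measurableType d)
  (P : probability T R) (w : nat -> T -> R) (om : R).
Hypotheses (om0 : 0 < om) (mw : forall i, measurable_fun setT (w i))
  (wv : forall i t, w i t = om \/ w i t = - om)
  (pw1 : forall i, P (w i @^-1` [set om]) = (2^-1)%:E)
  (pw2 : forall i, P (w i @^-1` [set - om]) = (2^-1)%:E)
  (ind : mutually_independent P w).

Definition restr n t : nat -> R := fun i => if (i < n)%N then w i t else 0.
Definition dep {X : Type} n (f : T -> X) := exists F : (nat -> R) -> X, forall t, f t = F (restr n t).

Lemma dep_cst {X : Type} n (c : X) : dep n (fun _ => c).
Proof. by exists (fun _ => c). Qed.

Lemma dep1 {X Y : Type} n (f : T -> X) (op : X -> Y) : dep n f -> dep n (fun t => op (f t)).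
Proof. by case=> F hF; exists (fun u => op (F u)) => t; rewrite hF. Qed.

Lemma dep2 {X Y Z : Type} n (f : T -> X) (g : T -> Y) (op : X -> Y -> Z) :
  dep n f -> dep n g -> dep n (fun t => op (f t) (g t)).
Proof. by case=> F hF [G hG]; exists (fun u => op (F u) (G u)) => t; rewrite hF hG. Qed.

Lemma dep3 {X Y Z W : Type} n (f : T -> X) (g : T -> Y) (k : T -> Z) (op : X -> Y -> Z -> W) :
  dep n f -> dep n g -> dep n k -> dep n (fun t => op (f t) (g t) (k t)).
Proof.
by case=> F hF [G hG] [K hK]; exists (fun u => op (F u) (G u) (K u)) => t; rewrite hF hG hK.
Qed.

Lemma dep_w n i : (i < n)%N -> dep n (w i).
Proof. by move=> hi; exists (fun u => u i) => t; rewrite /restr hi. Qed.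

Lemma dep_mono {X : Type} n m (f : T -> X) : (n <= m)%N -> dep n f -> dep m f.
Proof.
move=> hnm [F hF]; exists (fun u => F (fun i => if (i < n)%N then u i else 0)) => t.
rewrite hF; congr F; apply: funext => i; rewrite /restr.
by case: ifP => // hi; rewrite (leq_trans hi hnm).
Qed.

Lemma dep_ext {X : Type} n (f g : T -> X) : (forall t, f t = g t) -> dep n f -> dep n g.
Proof. by move=> e [F hF]; exists F => t; rewrite -e. Qed.

Definition vl (b : bool) := if b then om else - om.
Definition Bs n (b : n.-tuple bool) i : set R := [set vl (nth false b i)].
Definition A n (b : n.-tuple bool) : set T := \bigcap_(i in [set` In n]) (w i @^-1` Bs b i).

Lemma omN : om != - om.
Proof. apply/eqP => h; move: om0; have : om + om = 0 by rewrite {1}h addNr. lra. Qed.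

Lemma mpre i v : measurable (w i @^-1` [set v]).
Proof. by have := mw i measurableT (measurable_set1 v); rewrite setTI. Qed.

Lemma mA n (b : n.-tuple bool) : measurable (A b).
Proof. by apply: fin_bigcap_measurable; [exact: finite_fset| move=> i _; exact: mpre]. Qed.

Lemma inA n (b : n.-tuple bool) t : A b t <-> forall i, (i < n)%N -> w i t = vl (nth false b i).
Proof.
split.
- move=> h i hi; apply: h; by rewrite /= inIn.
- move=> h i /=; rewrite inIn => hi; exact: h.
Qed.

Definition bt n t : n.-tuple bool := [tuple (w i t == om) | i < n].

Lemma vl_bt n t i : (i < n)%N -> vl (nth false (bt n t) i) = w i t.
Proof.
move=> hi; rewrite -[i]/(nat_of_ord (Ordinal hi)) -tnth_nth tnth_mktuple /vl /=.
by case: eqP => // /eqP; case: (wv i t) => ->; rewrite ?eqxx.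
Qed.

Lemma A_bt n t : A (bt n t) t.
Proof. by apply/inA => i hi; rewrite vl_bt. Qed.

Lemma A_eq n (b : n.-tuple bool) t : A b t -> b = bt n t.
Proof.
move/inA => h; apply: eq_from_tnth => i.
rewrite tnth_mktuple (tnth_nth false) (h i (ltn_ord i)) /vl.
by case: (nth false b i); rewrite ?eqxx // eq_sym (negbTE omN).
Qed.

Lemma dec n (f : T -> R) : dep n f -> exists c : n.-tuple bool -> R,
  forall t, f t = \sum_(b : n.-tuple bool) c b * \1_(A b) t.
Proof.
case=> F hF; exists (fun b => F (fun i => if (i < n)%N then vl (nth false b i) else 0)).
move=> t; have At := @A_bt n t; have Ae := @A_eq n ^~ t; move: At Ae; set bb := bt n t => At Ae.
rewrite (bigD1 bb) //= big1 ?addr0.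
  rewrite indicE mem_set // mulr1 hF; congr F; apply: funext => i.
  by rewrite /restr; case: ifP => // hi; rewrite /bb vl_bt.
move=> b hb; rewrite indicE memNset ?mulr0 //.
by move/Ae => e; rewrite e eqxx in hb.
Qed.


Notation int f := (P.-integrable setT (EFin \o f)).
Notation Ex := (expect P).

Lemma int_ext f g : (forall t, f t = g t) -> int f -> int g.
Proof. by move=> e; apply: eq_integrable => // t _ /=; rewrite e. Qed.

Lemma intD f g : int f -> int g -> int (fun t => f t + g t).
Proof.
move=> hf hg; apply: eq_integrable (integrableD measurableT hf hg) => // t _ /=.

Qed.

Lemma intZ c f : int f -> int (fun t => c * f t).
Proof. by move=> hf; apply: eq_integrable (integrableZl measurableT c hf) => // t _ /=; rewrite EFinM. Qed.

Lemma int0 : int (fun _ => 0).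
Proof. exact: integrable0. Qed.

Lemma int_indic (B : set T) : measurable B -> int (\1_B).
Proof. by move=> mB; apply: integrable_indic. Qed.

Lemma int_sum (I : Type) (s : seq I) (F : I -> T -> R) :
  (forall i, int (F i)) -> int (fun t => \sum_(i <- s) F i t).
Proof.
move=> hF; elim: s => [|a s ih].
  by apply: (int_ext _ int0) => t; rewrite big_nil.
by apply: (int_ext _ (intD (hF a) ih)) => t; rewrite big_cons.
Qed.

Lemma dep_int n (f : T -> R) : dep n f -> int f.
Proof.
move/dec => [c hc]; apply: (int_ext (fun t => esym (hc t))).
apply: int_sum => b; apply: intZ; exact/int_indic/mA.
Qed.

Lemma ExR f : Ex f = \int[P]_(x in setT) f x.
Proof. by []. Qed.

Lemma E_D f g : int f -> int g -> Ex (fun t => f t + g t) = Ex f + Ex g.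
Proof. by move=> hf hg; rewrite !ExR RintegralD. Qed.

Lemma E_Z c f : int f -> Ex (fun t => c * f t) = c * Ex f.
Proof. by move=> hf; rewrite !ExR RintegralZl. Qed.

Lemma E_cst c : Ex (fun _ => c) = c.
Proof. rewrite ExR Rintegral_cst // (_ : fine _ = 1) ?mulr1 //. exact: (congr1 fine (probability_setT P)). Qed.

Lemma E_indic (B : set T) : measurable B -> Ex (\1_B) = fine (P B).
Proof. by move=> mB; rewrite /expect integral_indic // setIT. Qed.

Lemma E_sum (I : Type) (s : seq I) (F : I -> T -> R) :
  (forall i, int (F i)) -> Ex (fun t => \sum_(i <- s) F i t) = \sum_(i <- s) Ex (F i).
Proof.
move=> hF; elim: s => [|a s ih].
  by under eq_fun do rewrite big_nil; rewrite E_cst big_nil.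
under eq_fun do rewrite big_cons; rewrite E_D ?ih ?big_cons //.
exact: int_sum.
Qed.

Definition Av n (b : n.-tuple bool) v : set T := A b `&` (w n @^-1` [set v]).

Lemma Av_cap n (b : n.-tuple bool) v : Av b v =
  \bigcap_(i in [set` In n.+1]) (w i @^-1` (if i == n then [set v] else Bs b i)).
Proof.
apply/seteqP; split => t.
- case=> hA hv i /=; rewrite inIn ltnS leq_eqVlt => /orP[/eqP ->|hi].
    by rewrite eqxx.
  rewrite (ltn_eqF hi); apply: hA; by rewrite /= inIn.
- move=> h; split.
    move=> i /=; rewrite inIn => hi.
    have := h i; rewrite /= inIn ltnS (ltnW hi) (ltn_eqF hi); exact.
  by have := h n; rewrite /= inIn ltnS leqnn eqxx; apply.
Qed.

Lemma mAv n (b : n.-tuple bool) v : measurable (Av b v).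
Proof. by apply: measurableI; [exact: mA | exact: mpre]. Qed.

Lemma P_Av n (b : n.-tuple bool) : P (Av b om) = P (Av b (- om)).
Proof.
rewrite !Av_cap !ind; last 2 first.
- by move=> i _; case: (i == n); exact: measurable_set1.
- by move=> i _; case: (i == n); exact: measurable_set1.
apply: eq_bigr => i _; case: (i == n) => //.
by rewrite pw1 pw2.
Qed.

Lemma key n (f : T -> R) : dep n f -> Ex (fun t => f t * w n t) = 0.
Proof.
move/dec => [c hc].
have e : forall t, f t * w n t =
  \sum_(b : n.-tuple bool) (c b * om) * (\1_(Av b om) t - \1_(Av b (- om)) t).
  move=> t; rewrite hc big_distrl; apply: eq_bigr => b _ /=.
  rewrite !indicE.
  have [hA|hA] := pselect (A b t).
    rewrite (mem_set hA).
    case: (wv n t) => hw.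
      rewrite (mem_set (_ : Av b om t)); last by split.
      rewrite memNset; last by case=> _ /= h; move: om0; lra.
      by rewrite hw /=; ring.
    rewrite (mem_set (_ : Av b (- om) t)); last by split.
    rewrite memNset; last by case=> _ /= h; move: om0; lra.
    by rewrite hw /=; ring.
  rewrite (memNset hA) memNset; last by case.
  rewrite memNset; last by case.
  by rewrite /=; ring.
under eq_fun do rewrite e.
rewrite E_sum; last first.
  by move=> b; apply: intZ; apply: (int_ext (f := fun t => \1_(Av b om) t + (-1) * \1_(Av b (- om)) t));
    [move=> t; ring | apply: intD; [|apply: intZ]; apply: int_indic; exact: mAv].
apply: big1 => b _; rewrite E_Z; last first.
  by apply: (int_ext (f := fun t => \1_(Av b om) t + (-1) * \1_(Av b (- om)) t));
    [move=> t; ring | apply: intD; [|apply: intZ]; apply: int_indic; exact: mAv].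
rewrite (_ : Ex _ = Ex (fun t => \1_(Av b om) t + (-1) * \1_(Av b (- om)) t)); last first.
  by congr Ex; apply: funext => t; ring.
rewrite E_D ?E_Z ?E_indic ?P_Av; try (apply: int_indic || apply: intZ; apply: int_indic); try exact: mAv.
- by rewrite mulN1r subrr mulr0.
all: first [exact: int_indic (mAv _ _) | apply: intZ; exact: int_indic (mAv _ _)].
Qed.

Ltac dep_tac := repeat first [assumption | apply: dep_cst | (apply: dep_w; lia) | apply: dep2 | apply: dep1].

Lemma dyn (rho beta eps mu xstar Jstar x0 y0 y1 : R) (h g : R -> R) (x y : nat -> T -> R) :
  (forall t, x 0%N t = x0) -> (forall t, y 0%N t = y0) -> (forall t, y 1%N t = y1) ->
  (forall k t, x k.+1 t = x k t - rho * y k t + ghat eps g (y k t) (w k t)) ->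
  (forall k t, (1 <= k)%N ->
     y k.+1 t = (1 - beta) * y k t
       + hhat eps h (y k.-1 t) (w k.-1 t)
         * (Jquad Jstar mu xstar (x k t) - Jquad Jstar mu xstar (x k.-1 t))) ->
  forall k, dep k (x k) /\ dep k (y k) /\ dep k (y k.+1).
Proof.
move=> h0 h1 h2 hx hy; elim=> [|k [ihx [ihy ihy1]]].
  split; first by apply: (dep_ext (fun t => esym (h0 t))); exact: dep_cst.
  split; first by apply: (dep_ext (fun t => esym (h1 t))); exact: dep_cst.
  by apply: (dep_ext (fun t => esym (h2 t))); exact: dep_cst.
have ihx' := dep_mono (leqnSn k) ihx.
have ihy' := dep_mono (leqnSn k) ihy.
have ihy1' := dep_mono (leqnSn k) ihy1.
have dx : dep k.+1 (x k.+1).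
  by apply: (dep_ext (fun t => esym (hx k t))); dep_tac.
split => //; split => //.
by apply: (dep_ext (fun t => esym (hy k.+1 t isT))); dep_tac.
Qed.

Lemma wodd (g : R -> R) : (forall v, g (- v) = - g v) ->
  forall i t, g (w i t) = g om / om * w i t.
Proof.
have o0 : om != 0 by rewrite gt_eqF.
by move=> godd i t; case: (wv i t) => ->; rewrite ?godd; field.
Qed.

Lemma E_even (phi : R -> R) : phi (- om) = phi om -> Ex (fun t => phi (w 0%N t)) = phi om.
Proof.
move=> e; rewrite -[RHS](E_cst (phi om)); congr Ex; apply: funext => t.
by case: (wv 0%N t) => ->.
Qed.

Lemma E_lin6 c1 c2 c3 c4 c5 c6 (f1 f2 f3 f4 f5 f6 : T -> R) :
  int f1 -> int f2 -> int f3 -> int f4 -> int f5 -> int f6 ->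
  Ex (fun t => c1 * f1 t + c2 * f2 t + c3 * f3 t + c4 * f4 t + c5 * f5 t + c6 * f6 t) =
  c1 * Ex f1 + c2 * Ex f2 + c3 * Ex f3 + c4 * Ex f4 + c5 * Ex f5 + c6 * Ex f6.
Proof.
move=> i1 i2 i3 i4 i5 i6.
have iZ := intZ.
rewrite E_D; last 2 first.
- by repeat apply: intD; apply: intZ.
- exact: intZ.
rewrite E_D; last 2 first.
- by repeat apply: intD; apply: intZ.
- exact: intZ.
rewrite E_D; last 2 first.
- by repeat apply: intD; apply: intZ.
- exact: intZ.
rewrite E_D; last 2 first.
- by repeat apply: intD; apply: intZ.
- exact: intZ.
rewrite E_D; last 2 first.
- by repeat apply: intD; apply: intZ.
- exact: intZ.
by rewrite !E_Z.
Qed.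
End S.

Ltac dep_tac := repeat first [assumption | apply: dep_cst | (apply: dep_w; lia) | apply: dep2 | apply: dep1].

Unset Implicit Arguments.
Set Strict Implicit.

Theorem lemma8 (R : realType) (d : measure_display) (T : measurableType d)
  (P : probability T R)
  (rho beta eps omega mu xstar Jstar x0 y0 y1 : R)
  (h g : R -> R) (w : nat -> T -> R) (x y : nat -> T -> R) :
  0 < rho -> 0 < beta -> beta < 2 -> 0 < eps -> 0 < omega -> 0 < mu ->
  (* the w_i: measurable, valued in {-omega, omega}, each value w.p. 1/2, i.i.d. *)
  (forall i, measurable_fun setT (w i)) ->
  (forall i t, w i t = omega \/ w i t = - omega) ->
  (forall i, P (w i @^-1` [set omega]) = (2^-1)%:E) ->
  (forall i, P (w i @^-1` [set - omega]) = (2^-1)%:E) ->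
  mutually_independent P w ->
  (* h, g odd, same sign, vanishing exactly at 0 *)
  (forall v, h (- v) = - h v) -> (forall v, g (- v) = - g v) ->
  (forall v, Num.sg (g v) = Num.sg (h v)) ->
  (forall v, g v = 0 <-> v = 0) -> (forall v, h v = 0 <-> v = 0) ->
  (* the system, with deterministic x_0, y_0, y_1 *)
  (forall t, x 0%N t = x0) -> (forall t, y 0%N t = y0) -> (forall t, y 1%N t = y1) ->
  (forall k t, x k.+1 t = x k t - rho * y k t + ghat eps g (y k t) (w k t)) ->
  (forall k t, (1 <= k)%N ->
     y k.+1 t = (1 - beta) * y k t
       + hhat eps h (y k.-1 t) (w k.-1 t)
         * (Jquad Jstar mu xstar (x k t) - Jquad Jstar mu xstar (x k.-1 t))) ->
  let E := expect P in
  let xt := fun k t => x k t - xstar in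
  let psi := E (fun t => g (w 0%N t) ^+ 2) in
  let gam := E (fun t => h (w 0%N t) * g (w 0%N t)) in
  forall k : nat, (1 <= k)%N ->
  E (fun t => xt k.+1 t * y k.+1 t) =
    - rho * (1 - beta) * E (fun t => y k t ^+ 2)
    + mu * gam * E (fun t => xt k.-1 t ^+ 2)
    + mu * gam * ((3 * rho ^+ 2 + psi) / 2) * E (fun t => y k.-1 t ^+ 2)
    - 3 * mu * rho * gam * E (fun t => xt k.-1 t * y k.-1 t)
    + (1 - beta - mu * rho * gam) * E (fun t => xt k t * y k t)
    + mu * gam * psi * eps / 2 * (eps + 2 * E (fun t => `|y k.-1 t|)).
Proof.
move=> hrho hb1 hb2 heps hom hmu mw wv pw1 pw2 ind hodd godd _ _ _ hx0 hy0 hy1 hx hy E xt psi gam k.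
case: k => // m _.
rewrite /psi /gam /xt /E; cbv beta.
rewrite (_ : m.+1.-1 = m) //.
have om0 : omega != 0 by rewrite gt_eqF.
have hG := wodd hom wv godd.
have hH := wodd hom wv hodd.
have a0 : forall r : R, `|r| + eps != 0.
  by move=> r; rewrite gt_eqF //; have := normr_ge0 r; lra.
have -> : expect P (fun t => h (w 0%N t) * g (w 0%N t)) = h omega * g omega.
  by apply: (E_even P wv (phi := fun v => h v * g v)); rewrite hodd godd mulrNN.
have -> : expect P (fun t => g (w 0%N t) ^+ 2) = g omega ^+ 2.
  by apply: (E_even P wv (phi := fun v => g v ^+ 2)); rewrite godd sqrrN.
have D := dyn hom hx0 hy0 hy1 hx hy.
have [dxm [dym dym1]] := D m.
have [dxm1 [_ dym2]] := D m.+1.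
have dym1' := dep_mono (leqnSn m) dym1.
set Z1 := fun t => (`|y m.+1 t| + eps) * (g omega / omega) * y m.+2 t.
set Z2 := fun t => Z2f rho beta eps mu xstar Jstar (g omega) (h omega) omega (x m t) (y m t) (y m.+1 t).
have dZ2 : dep w m Z2 by rewrite /Z2; apply: dep3.
have dZ1 : dep w m.+1 Z1 by rewrite /Z1; dep_tac.
have pt : forall t, (x m.+2 t - xstar) * y m.+2 t =
   (- rho * (1 - beta) * (y m.+1 t ^+ 2) + mu * (h omega * g omega) * ((x m t - xstar) ^+ 2)
     + mu * (h omega * g omega) * ((3 * rho ^+ 2 + g omega ^+ 2) / 2) * (y m t ^+ 2)
     + (- (3 * mu * rho * (h omega * g omega))) * ((x m t - xstar) * y m t)
     + (1 - beta - mu * rho * (h omega * g omega)) * ((x m.+1 t - xstar) * y m.+1 t)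
     + mu * (h omega * g omega) * g omega ^+ 2 * eps / 2 * (eps + 2 * `|y m t|))
    + (Z2 t * w m t + Z1 t * w m.+1 t).
  move=> t; rewrite /Z1 /Z2 (hx m.+1 t) (hy m.+1 t isT) (hx m t).
  exact: (@pt_alg R rho beta eps mu xstar Jstar omega (g omega) (h omega) g h (x m t) (y m t) (y m.+1 t) (w m t) (w m.+1 t) om0 (a0 _) (wv m t) (hG m t) (hG m.+1 t) (hH m t)).
under eq_fun do rewrite pt.
have I2 : forall f, dep w m.+2 f -> P.-integrable setT (EFin \o f).
  by move=> f; apply: (dep_int P hom mw wv).
have dxm' := dep_mono (leqW (leqnSn m)) dxm.
have dym' := dep_mono (leqW (leqnSn m)) dym.
have dym1'' := dep_mono (leqnSn m.+1) dym1'.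
have dxm1' := dep_mono (leqnSn m.+1) dxm1.
have dym2' := dep_mono (leqnSn m.+1) dym2.
have dZ1' := dep_mono (leqnSn m.+1) dZ1.
have dZ2' := dep_mono (leqW (leqnSn m)) dZ2.
rewrite E_D; last 2 first.
- by apply: I2; dep_tac.
- by apply: I2; dep_tac.
rewrite [expect P (fun t => _ + Z1 t * w m.+1 t)]E_D; last 2 first.
- by apply: I2; dep_tac.
- by apply: I2; dep_tac.
rewrite (key hom mw wv pw1 pw2 ind dZ2) (key hom mw wv pw1 pw2 ind dZ1) !addr0.
rewrite E_lin6; try (by apply: I2; dep_tac).
rewrite E_D; last 2 first.
- by apply: I2; dep_tac.
- by apply: I2; dep_tac.
rewrite E_cst E_Z; last by apply: I2; dep_tac.
ring.
Qed.
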